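(* Let $X$ be a locally compact metrizable space, $F$ a discrete multivalued dynamical system on $X$ and $N$ an isolating neighborhood for $F$. Then for every $n\in\mathbb{N}$ there exist weak index pairs $P^1,\dots,P^n$ in $N$ such that $P^i_1\subset\operatorname{int}_N P^{i+1}_1$ and $P^i_2\subset\operatorname{int}_N P^{i+1}_2$ for $i=1,\dots,n-1$.
   Context: A discrete multivalued dynamical system (dmds) on $X$ is a usc map $F:X\times\mathbb{Z}\multimap X$ with compact values such that $F(x,0)=\{x\}$; $F(F(x,n),m)=F(x,n+m)$ whenever $nm\ge0$; $y\in F(x,-1)\iff x\in F(y,1)$; it is identified with its generator $F=F(\cdot,1)$. A solution through $x$ on an interval $I\ni0$ of $\mathbb{Z}$ is $\sigma:I\to X$ with $\sigma(0)=x$, $\sigma(n+1)\in F(\sigma(n))$; $\operatorname{Inv}N$ is the set of $x\in N$ with a solution $\sigma:\mathbb{Z}\to N$ through $x$. A compact $N$ is an isolating neighborhood if $\operatorname{Inv}N\subset\operatorname{int}N$. With $\operatorname{bd}_FA:=\operatorname{cl}A\cap\operatorname{cl}(F(A)\setminus A)$, a weak index pair in $N$ is a pair of compact sets $P_2\subset P_1\subset N$ with (a) $F(P_i)\cap N\subset P_i$ for $i=1,2$, (b) $\operatorname{bd}_FP_1\subset P_2$, (c) $\operatorname{Inv}N\subset\operatorname{int}(P_1\setminus P_2)$, (d) $P_1\setminus P_2\subset\operatorname{int}N$. $\operatorname{int}_N$ denotes interior relative to $N$. *)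

(* Defs.v *)
From Stdlib Require Import Reals ZArith List.
Open Scope R_scope.

Definition subset {X : Type} (A B : X -> Prop) : Prop := forall x, A x -> B x.

Definition is_metric {X : Type} (d : X -> X -> R) : Prop :=
  (forall x y, 0 <= d x y) /\
  (forall x y, d x y = 0 <-> x = y) /\
  (forall x y, d x y = d y x) /\
  (forall x y z, d x z <= d x y + d y z).

Definition metrizable {X : Type} (opens : (X -> Prop) -> Prop) : Prop :=
  exists d : X -> X -> R, is_metric d /\
    forall U : X -> Prop,
      opens U <-> (forall x, U x -> exists eps, 0 < eps /\
                     forall y, d x y < eps -> U y).

Definition interior {X : Type} (opens : (X -> Prop) -> Prop) (A : X -> Prop)
  : X -> Prop :=
  fun x => exists U, opens U /\ U x /\ subset U A.

Definition interior_in {X : Type} (opens : (X -> Prop) -> Prop) (N A : X -> Prop)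
  : X -> Prop :=
  fun x => N x /\ exists U, opens U /\ U x /\ (forall y, U y -> N y -> A y).

Definition closure {X : Type} (opens : (X -> Prop) -> Prop) (A : X -> Prop)
  : X -> Prop :=
  fun x => forall U, opens U -> U x -> exists y, U y /\ A y.

Definition compact {X : Type} (opens : (X -> Prop) -> Prop) (K : X -> Prop) : Prop :=
  forall (I : Type) (U : I -> X -> Prop),
    (forall i, opens (U i)) ->
    subset K (fun x => exists i, U i x) ->
    exists l : list I, subset K (fun x => exists i, In i l /\ U i x).

Definition locally_compact {X : Type} (opens : (X -> Prop) -> Prop) : Prop :=
  forall x : X, exists K, compact opens K /\ interior opens K x.

(* a multivalued map G : X -o X is encoded as G x y  <->  y \in G(x) *)
Definition usc {X : Type} (opens : (X -> Prop) -> Prop) (G : X -> X -> Prop) : Prop :=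
  forall x U, opens U -> subset (G x) U ->
    exists V, opens V /\ V x /\ forall x', V x' -> subset (G x') U.

Definition image {X : Type} (G : X -> X -> Prop) (A : X -> Prop) : X -> Prop :=
  fun y => exists x, A x /\ G x y.

(* discrete multivalued dynamical system F : X x Z -o X,
   F x n y  <->  y \in F(x,n).  Since Z is discrete, upper semicontinuity on
   X x Z amounts to upper semicontinuity of each F(.,n). *)
Definition is_dmds {X : Type} (opens : (X -> Prop) -> Prop)
  (F : X -> Z -> X -> Prop) : Prop :=
  (forall n, usc opens (fun x => F x n)) /\
  (forall x n, compact opens (F x n)) /\
  (forall x y, F x 0%Z y <-> y = x) /\
  (forall x n m, (0 <= n * m)%Z ->
     forall y, image (fun z => F z m) (F x n) y <-> F x (n + m)%Z y) /\
  (forall x y, F x (-1)%Z y <-> F y 1%Z x).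

Definition gen {X : Type} (F : X -> Z -> X -> Prop) : X -> X -> Prop :=
  fun x => F x 1%Z.

Definition Inv {X : Type} (F : X -> Z -> X -> Prop) (N : X -> Prop) : X -> Prop :=
  fun x => N x /\ exists sigma : Z -> X,
    sigma 0%Z = x /\
    forall n : Z, N (sigma n) /\ gen F (sigma n) (sigma (n + 1)%Z).

Definition isolating_neighborhood {X : Type} (opens : (X -> Prop) -> Prop)
  (F : X -> Z -> X -> Prop) (N : X -> Prop) : Prop :=
  compact opens N /\ subset (Inv F N) (interior opens N).

Definition setminus {X : Type} (A B : X -> Prop) : X -> Prop :=
  fun x => A x /\ ~ B x.

Definition bdF {X : Type} (opens : (X -> Prop) -> Prop)
  (F : X -> Z -> X -> Prop) (A : X -> Prop) : X -> Prop :=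
  fun x => closure opens A x /\
           closure opens (setminus (image (gen F) A) A) x.

Definition weak_index_pair {X : Type} (opens : (X -> Prop) -> Prop)
  (F : X -> Z -> X -> Prop) (N P1 P2 : X -> Prop) : Prop :=
  compact opens P1 /\ compact opens P2 /\
  subset P2 P1 /\ subset P1 N /\
  subset (fun y => image (gen F) P1 y /\ N y) P1 /\
  subset (fun y => image (gen F) P2 y /\ N y) P2 /\
  subset (bdF opens F P1) P2 /\
  subset (Inv F N) (interior opens (setminus P1 P2)) /\
  subset (setminus P1 P2) (interior opens N).

(* Main.v *)
From Stdlib Require Import Reals ZArith List Lra Lia Classical IndefiniteDescription.
Require Import Defs.
Open Scope R_scope.

Definition mopen {X : Type} (d : X -> X -> R) (U : X -> Prop) : Prop :=
  forall x, U x -> exists eps, 0 < eps /\ forall y, d x y < eps -> U y.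

Definition closed {X : Type} (opens : (X -> Prop) -> Prop) (C : X -> Prop) : Prop :=
  opens (fun x => ~ C x).

Definition MS {X : Type} (opens : (X -> Prop) -> Prop) (d : X -> X -> R) : Prop :=
  is_metric d /\ forall U, opens U <-> mopen d U.

Lemma open_ext {X} opens d (H : @MS X opens d) (U V : X -> Prop) :
  opens U -> (forall x, U x <-> V x) -> opens V.
Proof.
  intros HU HE. destruct H as [_ Hop]. apply Hop. apply Hop in HU.
  intros x Vx. destruct (HU x (proj2 (HE x) Vx)) as [e [He Hy]].
  exists e; split; auto. intros y Hd. apply HE; auto.
Qed.

Lemma open_ex {X} opens d (H : @MS X opens d) (I : Type) (P : I -> Prop) (U : I -> X -> Prop) :
  (forall i, opens (U i)) -> opens (fun x => exists i, P i /\ U i x).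
Proof.
  intros HU. destruct H as [_ Hop]. apply Hop.
  intros x [i [Pi Ux]]. destruct (proj1 (Hop _) (HU i) x Ux) as [e [He Hy]].
  exists e; split; auto. intros y Hd. exists i; auto.
Qed.

Lemma open_or {X} opens d (H : @MS X opens d) (U V : X -> Prop) :
  opens U -> opens V -> opens (fun x => U x \/ V x).
Proof.
  intros HU HV. destruct H as [Hm Hop]. apply Hop. apply Hop in HU. apply Hop in HV.
  intros x [Ux|Vx].
  - destruct (HU x Ux) as [e [He Hy]]. exists e; split; auto.
  - destruct (HV x Vx) as [e [He Hy]]. exists e; split; auto.
Qed.

Lemma open_and {X} opens d (H : @MS X opens d) (U V : X -> Prop) :
  opens U -> opens V -> opens (fun x => U x /\ V x).
Proof.
  intros HU HV. destruct H as [Hm Hop]. apply Hop. apply Hop in HU. apply Hop in HV.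
  intros x [Ux Vx].
  destruct (HU x Ux) as [e1 [He1 Hy1]]. destruct (HV x Vx) as [e2 [He2 Hy2]].
  exists (Rmin e1 e2); split. apply Rmin_pos; auto.
  intros y Hd. split; [apply Hy1|apply Hy2]; 
  [apply Rlt_le_trans with (1:=Hd); apply Rmin_l | apply Rlt_le_trans with (1:=Hd); apply Rmin_r].
Qed.

Lemma open_false {X} opens d (H : @MS X opens d) : opens (fun _ : X => False).
Proof. destruct H as [_ Hop]. apply Hop. intros x []. Qed.

Lemma open_true {X} opens d (H : @MS X opens d) : opens (fun _ : X => True).
Proof. destruct H as [_ Hop]. apply Hop. intros x _. exists 1; split; auto; lra. Qed.

Lemma open_ball {X} opens d (H : @MS X opens d) (x : X) (r : R) :
  opens (fun y => d x y < r).
Proof.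
  destruct H as [[Hpos [H0 [Hsym Htri]]] Hop]. apply Hop.
  intros y Hy. exists (r - d x y); split. lra.
  intros z Hz. pose proof (Htri x y z). lra.
Qed.

Lemma interior_open {X} opens d (H : @MS X opens d) (A : X -> Prop) :
  opens (interior opens A).
Proof.
  pose proof H as H'. destruct H as [_ Hop]. apply Hop.
  intros x [U [HU [Ux Hs]]]. destruct (proj1 (Hop U) HU x Ux) as [e [He Hy]].
  exists e; split; auto. intros y Hd. exists U; split; auto.
Qed.

Lemma interior_sub {X} opens (A : X -> Prop) x : interior opens A x -> A x.
Proof. intros [U [_ [Ux Hs]]]. apply Hs; auto. Qed.

Lemma closed_notopen {X} opens d (H : @MS X opens d) (U : X -> Prop) :
  opens U -> closed opens (fun x => ~ U x).
Proof. intros HU. unfold closed. apply (open_ext opens d H U); auto.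
  intros x; split; intros; tauto. Qed.

Lemma closed_and {X} opens d (H : @MS X opens d) (C D : X -> Prop) :
  closed opens C -> closed opens D -> closed opens (fun x => C x /\ D x).
Proof.
  intros HC HD. unfold closed in *.
  apply (open_ext opens d H (fun x => ~ C x \/ ~ D x)). apply (open_or opens d H); auto.
  intros x; tauto.
Qed.

Lemma closed_all {X} opens d (H : @MS X opens d) (I : Type) (C : I -> X -> Prop) :
  (forall i, closed opens (C i)) -> closed opens (fun x => forall i, C i x).
Proof.
  intros HC. unfold closed in *.
  apply (open_ext opens d H (fun x => exists i, True /\ ~ C i x)).
  apply (open_ex opens d H); auto.
  intros x; split.
  - intros [i [_ Hi]] Hall. apply Hi; auto.
  - intros Hn. apply not_all_ex_not in Hn. destruct Hn as [i Hi]. exists i; auto.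
Qed.

Lemma closure_closed {X} opens (C : X -> Prop) x :
  closed opens C -> closure opens C x -> C x.
Proof.
  intros HC Hcl. apply NNPP; intro Hn.
  destruct (Hcl _ HC Hn) as [y [Hy1 Hy2]]. auto.
Qed.

Lemma compact_ext {X} opens (K K' : X -> Prop) :
  compact opens K -> (forall x, K x <-> K' x) -> compact opens K'.
Proof.
  intros HK HE I U HU Hc. destruct (HK I U HU) as [l Hl].
  - intros x Kx. apply Hc, HE; auto.
  - exists l. intros x Kx. apply Hl, HE; auto.
Qed.

Lemma compact_empty {X} opens : compact opens (fun _ : X => False).
Proof. intros I U HU Hc. exists nil. intros x []. Qed.

Lemma compact_or {X} opens (K1 K2 : X -> Prop) :
  compact opens K1 -> compact opens K2 -> compact opens (fun x => K1 x \/ K2 x).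
Proof.
  intros H1 H2 I U HU Hc.
  destruct (H1 I U HU) as [l1 Hl1]. { intros x Kx; apply Hc; auto. }
  destruct (H2 I U HU) as [l2 Hl2]. { intros x Kx; apply Hc; auto. }
  exists (l1 ++ l2). intros x [Kx|Kx].
  - destruct (Hl1 x Kx) as [i [Hi Ui]]. exists i; split; auto. apply in_or_app; auto.
  - destruct (Hl2 x Kx) as [i [Hi Ui]]. exists i; split; auto. apply in_or_app; auto.
Qed.

Lemma compact_closed_and {X} opens (K C : X -> Prop) :
  compact opens K -> closed opens C -> compact opens (fun x => K x /\ C x).
Proof.
  intros HK HC I U HU Hc.
  destruct (HK (option I) (fun o x => match o with Some i => U i x | None => ~ C x end)) as [l Hl].
  - intros [i|]; auto.
  - intros x Kx. destruct (classic (C x)) as [Cx|Cx].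
    + destruct (Hc x (conj Kx Cx)) as [i Hi]. exists (Some i); auto.
    + exists None; auto.
  - exists (flat_map (fun o => match o with Some i => i :: nil | None => nil end) l).
    intros x [Kx Cx]. destruct (Hl x Kx) as [[i|] [Hi Ui]].
    + exists i; split; auto. apply in_flat_map. exists (Some i); simpl; auto.
    + contradiction.
Qed.

Lemma compact_bunion {X} opens (G : nat -> X -> Prop) :
  (forall j, compact opens (G j)) ->
  forall k, compact opens (fun x => exists j, (j < k)%nat /\ G j x).
Proof.
  intros HG k. induction k.
  - apply (compact_ext opens (fun _ => False)). apply compact_empty.
    intros x; split; [tauto| intros [j [Hj _]]; lia].
  - apply (compact_ext opens (fun x => (exists j, (j < k)%nat /\ G j x) \/ G k x)).
    apply compact_or; auto.
    intros x; split.
    + intros [[j [Hj Gj]]|Gk]. exists j; split; auto; lia. exists k; split; auto.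
    + intros [j [Hj Gj]]. destruct (Nat.eq_dec j k). subst; auto. left; exists j; split; auto; lia.
Qed.



Lemma list_min {X} (d : X -> X -> R) (x : X) (l : list X) :
  exists r, 0 < r /\ forall y, In y l -> d x y <= 0 \/ r <= d x y / 2.
Proof.
  induction l as [|y l IH].
  - exists 1; split; [lra|]. intros y [].
  - destruct IH as [r [Hr Hl]].
    destruct (Rlt_dec 0 (d x y)) as [Hp|Hp].
    + exists (Rmin r (d x y / 2)); split. apply Rmin_pos; lra.
      intros z [Hz|Hz].
      * subst; right; apply Rmin_r.
      * destruct (Hl z Hz) as [H0|H1]; [left; auto| right].
        apply Rle_trans with r; auto. apply Rmin_l.
    + exists r; split; auto. intros z [Hz|Hz].
      * subst. left. lra.
      * auto.
Qed.

Lemma separation {X} opens d (H : @MS X opens d) (K : X -> Prop) (x : X) :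
  compact opens K -> ~ K x ->
  exists O G, opens O /\ opens G /\ O x /\ subset K G /\ (forall z, ~ (O z /\ G z)).
Proof.
  intros HK Kx. pose proof H as HMS. destruct H as [[Hpos [H0 [Hsym Htri]]] Hop].
  destruct (HK X (fun y z => d y z < d x y / 2)) as [l Hl].
  - intros y. apply (open_ball opens d HMS).
  - intros y Ky. exists y. assert (y <> x) by (intro; subst; auto).
    assert (d x y <> 0) by (intro Hd; apply H0 in Hd; auto).
    pose proof (Hpos x y). assert (d y y = 0) by (apply H0; auto). lra.
  - destruct (list_min d x l) as [r [Hr Hm]].
    exists (fun z => d x z < r), (fun z => exists y, In y l /\ d y z < d x y / 2).
    split. apply (open_ball opens d HMS).
    split. apply (open_ex opens d HMS). intros y; apply (open_ball opens d HMS).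
    split. assert (d x x = 0) by (apply H0; auto). lra.
    split. auto.
    intros z [Hz [y [Hy Hyz]]]. pose proof (Hpos y z) as Hp1. pose proof (Htri x z y) as Ht.
    rewrite (Hsym z y) in Ht. destruct (Hm y Hy); lra.
Qed.

Lemma compact_closed {X} opens d (H : @MS X opens d) (K : X -> Prop) :
  compact opens K -> closed opens K.
Proof.
  intros HK. pose proof H as HMS. destruct H as [_ Hop]. unfold closed. apply Hop.
  intros x Kx. destruct (separation opens d HMS K x HK Kx) as [O [G [HO [HG [Ox [HKG Hd]]]]]].
  destruct (proj1 (Hop O) HO x Ox) as [e [He Hy]]. exists e; split; auto.
  intros y Hxy Ky. apply (Hd y); split; auto.
Qed.

Lemma fip {X} opens (K : X -> Prop) (I : Type) (i0 : I) (C : I -> X -> Prop) :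
  compact opens K -> (forall i, closed opens (C i)) ->
  (forall i j, exists k, forall x, C k x -> C i x /\ C j x) ->
  (forall i, exists x, K x /\ C i x) ->
  exists x, K x /\ forall i, C i x.
Proof.
  intros HK HC Hdir Hne. apply NNPP; intro Hn.
  destruct (HK I (fun i x => ~ C i x)) as [l Hl].
  - intros i; apply HC.
  - intros x Kx. apply NNPP; intro Hx. apply Hn. exists x; split; auto.
    intros i. apply NNPP; intro Hc. apply Hx. exists i; auto.
  - assert (Hk : exists k, forall x, C k x -> forall i, In i l -> C i x).
    { clear Hl. induction l as [|i l IH].
      - exists i0. intros x _ i [].
      - destruct IH as [k Hk]. destruct (Hdir i k) as [k' Hk'].
        exists k'. intros x Cx j [Hj|Hj].
        + subst. apply Hk'; auto.
        + apply Hk; auto. apply Hk'; auto. }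
    destruct Hk as [k Hk]. destruct (Hne k) as [x [Kx Cx]].
    destruct (Hl x Kx) as [i [Hi Ci]]. apply Ci. exact (Hk x Cx i Hi).
Qed.

Lemma image_compact {X} opens d (H : @MS X opens d) (r : X -> X -> Prop) (K : X -> Prop) :
  usc opens r -> (forall x, compact opens (r x)) -> compact opens K ->
  compact opens (image r K).
Proof.
  intros Hu Hr HK I U HU Hc.
  assert (HL : forall x, {l : list I | K x -> subset (r x) (fun y => exists i, In i l /\ U i y)}).
  { intros x. apply constructive_indefinite_description.
    destruct (classic (K x)) as [Kx|Kx].
    - destruct (Hr x I U HU) as [l Hl].
      + intros y Hy. apply Hc. exists x; auto.
      + exists l; auto.
    - exists nil; tauto. }
  set (L := fun x => proj1_sig (HL x)).
  assert (HV : forall x, {V : X -> Prop | opens V /\ (K x -> V x /\ forall x', V x' -> subset (r x') (fun y => exists i, In i (L x) /\ U i y)) /\ (~ K x -> forall z, ~ V z)}).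
  { intros x. apply constructive_indefinite_description.
    destruct (classic (K x)) as [Kx|Kx].
    - destruct (Hu x (fun y => exists i, In i (L x) /\ U i y)) as [V [HV1 [HV2 HV3]]].
      + apply (open_ex opens d H); auto.
      + unfold L. destruct (HL x) as [l Hl]; simpl. auto.
      + exists V; split; auto.
    - exists (fun _ => False). split. apply (open_false opens d H). split; tauto. }
  destruct (HK X (fun x => proj1_sig (HV x))) as [lx Hlx].
  - intros x. apply (proj2_sig (HV x)).
  - intros x Kx. exists x. apply (proj2_sig (HV x)); auto.
  - exists (flat_map L lx). intros y [x0 [Kx0 Hry]].
    destruct (Hlx x0 Kx0) as [x [Hx Vx]].
    pose proof (proj2_sig (HV x)) as [HV1 [HV2 HV3]].
    destruct (classic (K x)) as [Kx|Kx]; [| exfalso; apply (HV3 Kx x0); auto].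
    destruct (HV2 Kx) as [_ Hsub]. destruct (Hsub x0 Vx y Hry) as [i [Hi Ui]].
    exists i; split; auto. apply in_flat_map. exists x; auto.
Qed.

Fixpoint Gam {X} (N : X -> Prop) (r : X -> X -> Prop) (C : X -> Prop) (j : nat) : X -> Prop :=
  match j with
  | O => fun y => C y /\ N y
  | S j => fun y => N y /\ exists x, Gam N r C j x /\ r x y
  end.

Definition finv {X} (F : X -> Z -> X -> Prop) : X -> X -> Prop := fun x y => F x (-1)%Z y.

Lemma Gam_N {X} N r (C : X -> Prop) j x : Gam N r C j x -> N x.
Proof. destruct j; simpl; tauto. Qed.

Lemma Gam_mono {X} N r (C C' : X -> Prop) :
  (forall x, C x -> N x -> C' x) -> forall j x, Gam N r C j x -> Gam N r C' j x.
Proof.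
  intros HC j. induction j; simpl; intros x.
  - intros [Cx Nx]; auto.
  - intros [Nx [y [Hy Ry]]]. split; auto. exists y; auto.
Qed.

Lemma Gam_succ_sub {X} N r k (x : X) : Gam N r N (S k) x -> Gam N r N k x.
Proof.
  revert x. induction k; simpl; intros x.
  - tauto.
  - intros [Nx [y [Hy Ry]]]. split; auto. exists y; split; auto.
Qed.

Lemma Gam_le {X} N r m k (x : X) : (m <= k)%nat -> Gam N r N k x -> Gam N r N m x.
Proof.
  intros Hle. induction Hle; auto. intros H. apply IHHle. apply Gam_succ_sub; auto.
Qed.

Lemma Gam_comp {X} N r (C : X -> Prop) m j x :
  Gam N r (Gam N r C m) j x -> Gam N r C (j + m) x.
Proof.
  revert x. induction j; simpl; intros x.
  - tauto.
  - intros [Nx [y [Hy Ry]]]. split; auto. exists y; auto.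
Qed.

Lemma Gam_inv {X} N r (C P : X -> Prop) :
  (forall x y, P x -> r x y -> N y -> P y) -> (forall x, C x -> P x) ->
  forall j y, Gam N r C j y -> P y.
Proof.
  intros Hinv HC j. induction j; simpl; intros y.
  - intros [Cy _]; auto.
  - intros [Ny [x [Hx Rx]]]. eapply Hinv; eauto.
Qed.

Lemma Gam_compact {X} opens d (H : @MS X opens d) N r (C : X -> Prop) :
  compact opens N -> usc opens r -> (forall x, compact opens (r x)) ->
  compact opens C -> forall j, compact opens (Gam N r C j).
Proof.
  intros HN Hu Hr HC. assert (HNc : closed opens N) by (apply (compact_closed opens d H); auto).
  induction j; simpl.
  - apply compact_closed_and; auto.
  - apply (compact_ext opens (fun y => image r (Gam N r C j) y /\ N y)).
    apply compact_closed_and; auto. apply (image_compact opens d H); auto.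
    intros y; unfold image; split; intros [A B]; split; auto.
Qed.

Definition dinv {X} (F : X -> Z -> X -> Prop) := forall x y, F x (-1)%Z y <-> F y 1%Z x.

Lemma fwd_back {X} (F : X -> Z -> X -> Prop) N (C : X -> Prop) :
  dinv F -> forall j k y, Gam N (gen F) C j y -> Gam N (finv F) N k y ->
  exists c, C c /\ Gam N (finv F) N (j + k) c.
Proof.
  intros Hd j. induction j; intros k y.
  - intros [Cy Ny] HA. exists y; auto.
  - intros [Ny [x [Hx Fx]]] HA.
    destruct (IHj (S k) x Hx) as [c [Cc Hc]].
    + simpl. split. eapply Gam_N; eauto. exists y; split; auto. apply Hd. exact Fx.
    + exists c; split; auto. replace (S j + k)%nat with (j + S k)%nat by lia. exact Hc.
Qed.

Lemma Inv_A {X} (F : X -> Z -> X -> Prop) N x :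
  dinv F -> Inv F N x -> forall m, Gam N (finv F) N m x.
Proof.
  intros Hd [Nx [sigma [H0 Hs]]]. subst x.
  assert (forall m n, Gam N (finv F) N m (sigma n)).
  { intros m; induction m; intros n; simpl.
    - split; apply Hs.
    - split. apply Hs. exists (sigma (n + 1)%Z); split; auto. apply Hd. apply Hs. }
  auto.
Qed.

Lemma Inv_B {X} (F : X -> Z -> X -> Prop) N x :
  Inv F N x -> forall m, Gam N (gen F) N m x.
Proof.
  intros [Nx [sigma [H0 Hs]]]. subst x.
  assert (forall m n, Gam N (gen F) N m (sigma n)).
  { intros m; induction m; intros n; simpl.
    - split; apply Hs.
    - split. apply Hs. exists (sigma (n - 1)%Z); split; auto.
      destruct (Hs (n - 1)%Z) as [_ Hg]. replace (n - 1 + 1)%Z with n in Hg by lia. auto. }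
  auto.
Qed.

Lemma dmds_usc1 {X} opens (F : X -> Z -> X -> Prop) : is_dmds opens F -> usc opens (gen F).
Proof. intros [H _]. apply (H 1%Z). Qed.
Lemma dmds_usc2 {X} opens (F : X -> Z -> X -> Prop) : is_dmds opens F -> usc opens (finv F).
Proof. intros [H _]. apply (H (-1)%Z). Qed.
Lemma dmds_cpt1 {X} opens (F : X -> Z -> X -> Prop) : is_dmds opens F -> forall x, compact opens (gen F x).
Proof. intros [_ [H _]] x. apply H. Qed.
Lemma dmds_cpt2 {X} opens (F : X -> Z -> X -> Prop) : is_dmds opens F -> forall x, compact opens (finv F x).
Proof. intros [_ [H _]] x. apply H. Qed.
Lemma dmds_inv {X} opens (F : X -> Z -> X -> Prop) : is_dmds opens F -> dinv F.
Proof. intros [_ [_ [_ [_ H]]]]. exact H. Qed.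

Lemma Aw_next {X} opens d (H : @MS X opens d) (F : X -> Z -> X -> Prop) N x :
  is_dmds opens F -> compact opens N ->
  (forall m, Gam N (finv F) N m x) ->
  exists y, gen F x y /\ forall m, Gam N (finv F) N m y.
Proof.
  intros Hdm HN Hx.
  destruct (fip opens (gen F x) nat 0%nat (fun m => Gam N (finv F) N m)) as [y [Hy Hall]].
  - apply (dmds_cpt1 opens F Hdm).
  - intros m. apply (compact_closed opens d H). apply (Gam_compact opens d H); auto.
    apply (dmds_usc2 opens F Hdm). apply (dmds_cpt2 opens F Hdm).
  - intros i j. exists (max i j). intros z Hz. split; apply Gam_le with (k := max i j); try exact Hz; lia.
  - intros m. destruct (Hx (S m)) as [_ [z [Hz Fz]]]. exists z; split; auto.
    apply (dmds_inv opens F Hdm). exact Fz.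
  - exists y; auto.
Qed.

Lemma Bw_prev {X} opens d (H : @MS X opens d) (F : X -> Z -> X -> Prop) N x :
  is_dmds opens F -> compact opens N ->
  (forall m, Gam N (gen F) N m x) ->
  exists y, gen F y x /\ forall m, Gam N (gen F) N m y.
Proof.
  intros Hdm HN Hx.
  destruct (fip opens (finv F x) nat 0%nat (fun m => Gam N (gen F) N m)) as [y [Hy Hall]].
  - apply (dmds_cpt2 opens F Hdm).
  - intros m. apply (compact_closed opens d H). apply (Gam_compact opens d H); auto.
    apply (dmds_usc1 opens F Hdm). apply (dmds_cpt1 opens F Hdm).
  - intros i j. exists (max i j). intros z Hz. split; apply Gam_le with (k := max i j); try exact Hz; lia.
  - intros m. destruct (Hx (S m)) as [_ [z [Hz Fz]]]. exists z; split; auto.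
    apply (dmds_inv opens F Hdm). exact Fz.
  - exists y; split; auto. apply (dmds_inv opens F Hdm). exact Hy.
Qed.

Lemma Q0_Inv {X} opens d (H : @MS X opens d) (F : X -> Z -> X -> Prop) N x :
  is_dmds opens F -> compact opens N ->
  (forall m, Gam N (finv F) N m x /\ Gam N (gen F) N m x) -> Inv F N x.
Proof.
  intros Hdm HN Hx.
  set (Aw := fun z => forall m, Gam N (finv F) N m z).
  set (Bw := fun z => forall m, Gam N (gen F) N m z).
  assert (Hg : forall z, {y | Aw z -> gen F z y /\ Aw y}).
  { intros z. apply constructive_indefinite_description.
    destruct (classic (Aw z)) as [Hz|Hz].
    - destruct (Aw_next opens d H F N z Hdm HN Hz) as [y Hy]. exists y; auto.
    - exists z; tauto. }
  assert (Hh : forall z, {y | Bw z -> gen F y z /\ Bw y}).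
  { intros z. apply constructive_indefinite_description.
    destruct (classic (Bw z)) as [Hz|Hz].
    - destruct (Bw_prev opens d H F N z Hdm HN Hz) as [y Hy]. exists y; auto.
    - exists z; tauto. }
  set (g := fun z => proj1_sig (Hg z)). set (h := fun z => proj1_sig (Hh z)).
  assert (HA : forall n, Aw (Nat.iter n g x)).
  { induction n; simpl. intros m; apply Hx. apply (proj2_sig (Hg _) IHn). }
  assert (HB : forall n, Bw (Nat.iter n h x)).
  { induction n; simpl. intros m; apply Hx. apply (proj2_sig (Hh _) IHn). }
  assert (NA : forall z, Aw z -> N z). { intros z Hz. apply (Hz 0%nat). }
  assert (NB : forall z, Bw z -> N z). { intros z Hz. apply (Hz 0%nat). }
  split. apply (Hx 0%nat).
  exists (fun z : Z => if Z_le_dec 0 z then Nat.iter (Z.to_nat z) g x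
                    else Nat.iter (Z.to_nat (- z)) h x).
  split. reflexivity.
  intros z. destruct (Z_le_dec 0 z) as [Hz|Hz].
  - destruct (Z_le_dec 0 (z + 1)) as [Hz1|Hz1]; [|lia].
    replace (Z.to_nat (z + 1)) with (S (Z.to_nat z)) by lia. simpl.
    split. apply NA, HA. apply (proj2_sig (Hg _) (HA _)).
  - split. apply NB, HB.
    destruct (Z_le_dec 0 (z + 1)) as [Hz1|Hz1].
    + assert (z = -1)%Z by lia. subst z. simpl.
      apply (proj2_sig (Hh x) (HB 0%nat)).
    + replace (Z.to_nat (- z)) with (S (Z.to_nat (- (z + 1)))) by lia. simpl.
      apply (proj2_sig (Hh _) (HB _)).
Qed.

Definition valid {X} (opens : (X -> Prop) -> Prop) (Q : X -> Prop) (p : (X -> Prop) * (X -> Prop)) : Prop :=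
  opens (fst p) /\ opens (snd p) /\ (forall z, ~ (fst p z /\ snd p z)) /\ subset Q (snd p).
Definition Wof {X} (N O : X -> Prop) : X -> Prop := fun x => N x /\ ~ O x.
Definition pjoin {X} (p1 p2 : (X -> Prop) * (X -> Prop)) : (X -> Prop) * (X -> Prop) :=
  (fun x => fst p1 x \/ fst p2 x, fun x => snd p1 x /\ snd p2 x).

Lemma valid_join {X} opens d (H : @MS X opens d) Q p1 p2 :
  valid opens Q p1 -> valid opens Q p2 -> valid opens Q (pjoin p1 p2).
Proof.
  intros [A1 [B1 [C1 D1]]] [A2 [B2 [C2 D2]]]. unfold pjoin; simpl.
  split. apply (open_or opens d H); auto.
  split. apply (open_and opens d H); auto.
  split. intros z [[Hz|Hz] [G1 G2]]; [apply (C1 z)|apply (C2 z)]; auto.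
  intros x Qx; split; auto.
Qed.

Lemma valid_triv {X} opens d (H : @MS X opens d) (Q : X -> Prop) :
  valid opens Q (fun _ => False, fun _ => True).
Proof.
  split. apply (open_false opens d H). split. apply (open_true opens d H).
  split. simpl; tauto. intros x _; simpl; auto.
Qed.

Lemma valid_sub {X} opens (Q Q' : X -> Prop) p :
  subset Q' Q -> valid opens Q p -> valid opens Q' p.
Proof. intros Hs [A [B [C D]]]. repeat split; auto. intros x Hx; apply D, Hs, Hx. Qed.

Lemma Wof_compact {X} opens d (H : @MS X opens d) (N O : X -> Prop) :
  compact opens N -> opens O -> compact opens (Wof N O).
Proof. intros HN HO. apply compact_closed_and; auto. apply (closed_notopen opens d H); auto. Qed.

Lemma Wof_join_sub {X} (N : X -> Prop) p1 p2 x : Wof N (fst (pjoin p1 p2)) x -> Wof N (fst p1) x /\ Wof N (fst p2) x.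
Proof. unfold Wof, pjoin; simpl; tauto. Qed.

Lemma rel_int {X} opens (N Q : X -> Prop) p :
  valid opens Q p -> subset Q N -> subset Q (interior_in opens N (Wof N (fst p))).
Proof.
  intros [A [B [C D]]] HQ x Qx. split. apply HQ; auto.
  exists (snd p). split; auto. split. apply D; auto.
  intros y Gy Ny. split; auto. intros Oy. apply (C y); auto.
Qed.

Lemma LIM_gam {X} opens d (H : @MS X opens d) (F : X -> Z -> X -> Prop) (N Q : X -> Prop) :
  is_dmds opens F -> compact opens N -> compact opens Q -> subset Q N ->
  forall j y, (forall p, valid opens Q p -> Gam N (gen F) (Wof N (fst p)) j y) ->
  Gam N (gen F) Q j y.
Proof.
  intros Hdm HN HQ HQN j. induction j; intros y Hy.
  - simpl. assert (Ny : N y) by (apply (Hy _ (valid_triv opens d H Q))).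
    split; auto. apply NNPP; intro Qy.
    destruct (separation opens d H Q y HQ Qy) as [O [G [HO [HG [Oy [HQG Hd]]]]]].
    assert (valid opens Q (O, G)) by (repeat split; auto).
    destruct (Hy _ H0) as [[_ HnO] _]. simpl in HnO. auto.
  - assert (Ny : N y) by (apply (Hy _ (valid_triv opens d H Q))).
    set (I := {p | valid opens Q p}).
    destruct (fip opens (finv F y) I (exist _ _ (valid_triv opens d H Q))
               (fun p => Gam N (gen F) (Wof N (fst (proj1_sig p))) j)) as [x [Fx Hx]].
    + apply (dmds_cpt2 opens F Hdm).
    + intros [p Hp]; simpl. apply (compact_closed opens d H). apply (Gam_compact opens d H); auto.
      apply (dmds_usc1 opens F Hdm). apply (dmds_cpt1 opens F Hdm).
      apply (Wof_compact opens d H); auto. apply Hp.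
    + intros [p1 H1] [p2 H2]. exists (exist _ _ (valid_join opens d H Q p1 p2 H1 H2)); simpl.
      intros x Hx; split; (eapply Gam_mono; [|exact Hx]); intros z Hz _; apply Wof_join_sub in Hz; tauto.
    + intros [p Hp]; simpl. destruct (Hy p Hp) as [_ [x [Hx Fx]]]. exists x; split; auto.
      apply (dmds_inv opens F Hdm). exact Fx.
    + simpl. split; auto. exists x. split.
      * apply IHj. intros p Hp. apply (Hx (exist _ p Hp)).
      * apply (dmds_inv opens F Hdm). exact Fx.
Qed.

Lemma LIM_choose {X} opens d (H : @MS X opens d) (F : X -> Z -> X -> Prop) (N Q : X -> Prop) :
  is_dmds opens F -> compact opens N -> compact opens Q -> subset Q N ->
  forall j (E : X -> Prop), closed opens E ->
  (forall x, Gam N (gen F) Q j x -> E x -> False) ->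
  exists p, valid opens Q p /\ forall x, Gam N (gen F) (Wof N (fst p)) j x -> E x -> False.
Proof.
  intros Hdm HN HQ HQN j E HE Hj. apply NNPP; intro Hn.
  set (I := {p | valid opens Q p}).
  destruct (fip opens N I (exist _ _ (valid_triv opens d H Q))
               (fun p x => Gam N (gen F) (Wof N (fst (proj1_sig p))) j x /\ E x)) as [x [Nx Hx]].
  - auto.
  - intros [p Hp]; simpl. apply (closed_and opens d H); auto. apply (compact_closed opens d H). apply (Gam_compact opens d H); auto.
    apply (dmds_usc1 opens F Hdm). apply (dmds_cpt1 opens F Hdm).
    apply (Wof_compact opens d H); auto. apply Hp.
  - intros [p1 H1] [p2 H2]. exists (exist _ _ (valid_join opens d H Q p1 p2 H1 H2)); simpl.
    intros x [Hx Ex]; split; split; auto; (eapply Gam_mono; [|exact Hx]); intros z Hz _; apply Wof_join_sub in Hz; tauto.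
  - intros [p Hp]; simpl. apply NNPP; intro Hne. apply Hn. exists p; split; auto.
    intros x Gx Ex. apply Hne. exists x. split; auto. eapply Gam_N; eauto.
  - apply (Hj x).
    + apply (LIM_gam opens d H F N Q Hdm HN HQ HQN). intros p Hp. apply (Hx (exist _ p Hp)).
    + apply (Hx (exist _ _ (valid_triv opens d H Q))).
Qed.

Lemma LIM_choose_all {X} opens d (H : @MS X opens d) (F : X -> Z -> X -> Prop) (N Q : X -> Prop) :
  is_dmds opens F -> compact opens N -> compact opens Q -> subset Q N ->
  forall (E : X -> Prop), closed opens E -> forall k,
  (forall j, (j < k)%nat -> forall x, Gam N (gen F) Q j x -> E x -> False) ->
  exists p, valid opens Q p /\ forall j, (j < k)%nat -> forall x, Gam N (gen F) (Wof N (fst p)) j x -> E x -> False.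
Proof.
  intros Hdm HN HQ HQN E HE k. induction k; intros Hk.
  - exists (fun _ => False, fun _ => True). split. apply (valid_triv opens d H). intros; lia.
  - destruct IHk as [p1 [H1 Hp1]]. { intros j Hj; apply Hk; lia. }
    destruct (LIM_choose opens d H F N Q Hdm HN HQ HQN k E HE) as [p2 [H2 Hp2]]. { apply Hk; lia. }
    exists (pjoin p1 p2). split. apply (valid_join opens d H); auto.
    intros j Hj x Gx Ex. destruct (Nat.eq_dec j k).
    + subst. apply (Hp2 x); auto. eapply Gam_mono; [|exact Gx]. intros z Hz _; apply Wof_join_sub in Hz; tauto.
    + apply (Hp1 j ltac:(lia) x); auto. eapply Gam_mono; [|exact Gx]. intros z Hz _; apply Wof_join_sub in Hz; tauto.
Qed.

Definition P1set {X} (F : X -> Z -> X -> Prop) (N : X -> Prop) k (W : X -> Prop) : X -> Prop :=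
  fun x => (exists j, (j < k)%nat /\ Gam N (gen F) W j x) \/ Gam N (gen F) N k x.
Definition Cset {X} opens (F : X -> Z -> X -> Prop) (N : X -> Prop) k (W M : X -> Prop) : X -> Prop :=
  fun x => (P1set F N k W x /\ ~ interior opens N x) \/ M x.
Definition P2set {X} opens (F : X -> Z -> X -> Prop) (N : X -> Prop) k (W M : X -> Prop) : X -> Prop :=
  fun x => exists j, (j < k)%nat /\ Gam N (gen F) (Cset opens F N k W M) j x.
Definition Good {X} opens (F : X -> Z -> X -> Prop) (N : X -> Prop) k (W M : X -> Prop) : Prop :=
  (1 <= k)%nat /\
  (forall x, Gam N (finv F) N k x -> Gam N (gen F) N k x -> interior opens N x) /\
  compact opens W /\ subset W N /\ subset (Inv F N) (interior opens W) /\
  (forall j, (j < k)%nat -> forall x, Gam N (gen F) W j x -> Gam N (finv F) N k x -> interior opens N x) /\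
  compact opens M /\ subset M (P1set F N k W) /\ (forall x, M x -> ~ Gam N (finv F) N k x).


Lemma P1_fwd {X} opens (F : X -> Z -> X -> Prop) N k (W M : X -> Prop) :
  Good opens F N k W M -> forall x y, P1set F N k W x -> gen F x y -> N y -> P1set F N k W y.
Proof.
  intros [Hk [H0 [HW [HWN [HWI [HR [HM [HMP HMA]]]]]]]] x y [[j [Hj Gx]]|Bx] Fxy Ny.
  - destruct (Nat.eq_dec (S j) k) as [E|E].
    + right. rewrite <- E. simpl. split; auto. exists x; split; auto.
      eapply Gam_mono; [|exact Gx]. intros; auto.
    + left. exists (S j). split. lia. simpl; split; auto. exists x; auto.
  - right. apply Gam_succ_sub. simpl. split; auto. exists x; auto.
Qed.

Lemma P1_N {X} (F : X -> Z -> X -> Prop) N k (W : X -> Prop) x : P1set F N k W x -> N x.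
Proof. intros [[j [_ G]]|G]; eapply Gam_N; eauto. Qed.

Lemma P1_A {X} opens (F : X -> Z -> X -> Prop) N k (W M : X -> Prop) :
  Good opens F N k W M -> forall x, P1set F N k W x -> Gam N (finv F) N k x -> interior opens N x.
Proof.
  intros [Hk [H0 [HW [HWN [HWI [HR [HM [HMP HMA]]]]]]]] x [[j [Hj Gx]]|Bx] Ax.
  - eapply HR; eauto.
  - apply H0; auto.
Qed.

Lemma P1_compact {X} opens d (H : @MS X opens d) (F : X -> Z -> X -> Prop) N k (W M : X -> Prop) :
  is_dmds opens F -> compact opens N -> Good opens F N k W M -> compact opens (P1set F N k W).
Proof.
  intros Hdm HN [Hk [H0 [HW _]]]. apply compact_or.
  - apply compact_bunion. intros j. apply (Gam_compact opens d H); auto.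
    apply (dmds_usc1 opens F Hdm). apply (dmds_cpt1 opens F Hdm).
  - apply (Gam_compact opens d H); auto.
    apply (dmds_usc1 opens F Hdm). apply (dmds_cpt1 opens F Hdm).
Qed.

Lemma C_noA {X} opens (F : X -> Z -> X -> Prop) N k (W M : X -> Prop) :
  Good opens F N k W M -> forall x, Cset opens F N k W M x -> ~ Gam N (finv F) N k x.
Proof.
  intros HG x [[P1x nI]|Mx] Ax.
  - apply nI. eapply P1_A; eauto.
  - destruct HG as [_ [_ [_ [_ [_ [_ [_ [_ HMA]]]]]]]]. eapply HMA; eauto.
Qed.

Lemma C_sub_P1 {X} opens (F : X -> Z -> X -> Prop) N k (W M : X -> Prop) :
  Good opens F N k W M -> forall x, Cset opens F N k W M x -> P1set F N k W x.
Proof.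
  intros HG x [[P1x nI]|Mx]; auto.
  destruct HG as [_ [_ [_ [_ [_ [_ [_ [HMP _]]]]]]]]. apply HMP; auto.
Qed.

Lemma P2_sub_P1 {X} opens (F : X -> Z -> X -> Prop) N k (W M : X -> Prop) :
  Good opens F N k W M -> forall x, P2set opens F N k W M x -> P1set F N k W x.
Proof.
  intros HG x [j [Hj Gx]]. eapply (Gam_inv N (gen F) _ (P1set F N k W)); [| |exact Gx].
  - apply (P1_fwd opens F N k W M HG).
  - apply (C_sub_P1 opens F N k W M HG).
Qed.

Lemma C_compact {X} opens d (H : @MS X opens d) (F : X -> Z -> X -> Prop) N k (W M : X -> Prop) :
  is_dmds opens F -> compact opens N -> Good opens F N k W M -> compact opens (Cset opens F N k W M).
Proof.
  intros Hdm HN HG. apply compact_or.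
  - apply compact_closed_and. apply (P1_compact opens d H F N k W M); auto.
    apply (closed_notopen opens d H). apply (interior_open opens d H).
  - apply HG.
Qed.

Lemma P2_compact {X} opens d (H : @MS X opens d) (F : X -> Z -> X -> Prop) N k (W M : X -> Prop) :
  is_dmds opens F -> compact opens N -> Good opens F N k W M -> compact opens (P2set opens F N k W M).
Proof.
  intros Hdm HN HG. apply compact_bunion. intros j. apply (Gam_compact opens d H); auto.
  apply (dmds_usc1 opens F Hdm). apply (dmds_cpt1 opens F Hdm).
  apply (C_compact opens d H F N k W M); auto.
Qed.

Lemma P2_fwd {X} opens (F : X -> Z -> X -> Prop) N k (W M : X -> Prop) :
  is_dmds opens F -> Good opens F N k W M ->
  forall x y, P2set opens F N k W M x -> gen F x y -> N y -> P2set opens F N k W M y.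
Proof.
  intros Hdm HG x y [j [Hj Gx]] Fxy Ny.
  assert (Gy : Gam N (gen F) (Cset opens F N k W M) (S j) y) by (simpl; split; auto; exists x; auto).
  destruct (Nat.eq_dec (S j) k) as [E|E].
  - exfalso. destruct (fwd_back F N _ (dmds_inv opens F Hdm) (S j) 0 y Gy) as [c [Cc Ac]].
    + simpl; auto.
    + apply (C_noA opens F N k W M HG c Cc). rewrite <- E. rewrite Nat.add_0_r in Ac. exact Ac.
  - exists (S j); split; auto. lia.
Qed.

Lemma Inv_notP2 {X} opens (F : X -> Z -> X -> Prop) N k (W M : X -> Prop) :
  is_dmds opens F -> Good opens F N k W M ->
  forall x, Inv F N x -> ~ P2set opens F N k W M x.
Proof.
  intros Hdm HG x Ix [j [Hj Gx]].
  destruct (fwd_back F N _ (dmds_inv opens F Hdm) j k x Gx) as [c [Cc Ac]].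
  - apply Inv_A; auto. apply (dmds_inv opens F Hdm).
  - apply (C_noA opens F N k W M HG c Cc). apply Gam_le with (k := (j + k)%nat); auto. lia.
Qed.

Lemma WIP {X} opens d (H : @MS X opens d) (F : X -> Z -> X -> Prop) N k (W M : X -> Prop) :
  is_dmds opens F -> compact opens N -> Good opens F N k W M ->
  weak_index_pair opens F N (P1set F N k W) (P2set opens F N k W M).
Proof.
  intros Hdm HN HG.
  assert (HP1 := P1_compact opens d H F N k W M Hdm HN HG).
  assert (HP2 := P2_compact opens d H F N k W M Hdm HN HG).
  assert (Hk : (1 <= k)%nat) by apply HG.
  assert (CP2 : forall x, Cset opens F N k W M x -> P2set opens F N k W M x).
  { intros x Cx. exists 0%nat. split. lia. simpl. split; auto.
    apply (P1_N F N k W). apply (C_sub_P1 opens F N k W M HG); auto. }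
  split; auto. split; auto.
  split. { intros x; apply (P2_sub_P1 opens F N k W M HG). }
  split. { intros x; apply P1_N. }
  split. { intros y [[x [Px Fx]] Ny]. apply (P1_fwd opens F N k W M HG x y); auto. }
  split. { intros y [[x [Px Fx]] Ny]. apply (P2_fwd opens F N k W M Hdm HG x y); auto. }
  split.
  { intros x [Hc1 Hc2]. apply CP2. left.
    assert (P1x : P1set F N k W x).
    { apply (closure_closed opens); auto. apply (compact_closed opens d H); auto. }
    split; auto. intros Ix.
    destruct (Hc2 _ (interior_open opens d H N) Ix) as [z [Iz [[w [Pw Fw]] nPz]]].
    apply nPz. apply (P1_fwd opens F N k W M HG w z); auto. apply (interior_sub opens N z Iz). }
  split.
  { intros x Ix. pose proof HG as HG'. destruct HG' as [_ [_ [_ [HWN [HWI _]]]]].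
    destruct (HWI x Ix) as [U [HU [Ux HUW]]].
    exists (fun y => U y /\ ~ P2set opens F N k W M y). split.
    apply (open_and opens d H); auto. apply (compact_closed opens d H); auto.
    split. split; auto. apply (Inv_notP2 opens F N k W M Hdm); auto.
    intros y [Uy nP2]. split; auto. left. exists 0%nat. split. lia. simpl.
    split; auto. }
  { intros x [P1x nP2]. apply NNPP; intro nI. apply nP2. apply CP2. left; auto. }
Qed.

Lemma interior_in_mono {X} opens (N A B : X -> Prop) x :
  subset A B -> interior_in opens N A x -> interior_in opens N B x.
Proof. intros Hs [Nx [U [HU [Ux HA]]]]. split; auto. exists U; repeat split; auto. Qed.

Lemma Inv_int_W {X} opens d (H : @MS X opens d) (F : X -> Z -> X -> Prop) N Q p :
  valid opens Q p -> subset (Inv F N) Q -> subset (Inv F N) (interior opens N) ->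
  subset (Inv F N) (interior opens (Wof N (fst p))).
Proof.
  intros [A [B [C D]]] HQ HI x Ix.
  exists (fun y => interior opens N y /\ snd p y). split.
  apply (open_and opens d H); auto. apply (interior_open opens d H).
  split. split. apply HI, Ix. apply D, HQ, Ix.
  intros y [Iy Gy]. split. apply (interior_sub opens N y Iy). intros Oy. apply (C y); auto.
Qed.

Lemma P2_noA {X} opens (F : X -> Z -> X -> Prop) N k (W M : X -> Prop) :
  is_dmds opens F -> Good opens F N k W M ->
  forall x, P2set opens F N k W M x -> ~ Gam N (finv F) N k x.
Proof.
  intros Hdm HG x [j [Hj Gx]] Ax.
  destruct (fwd_back F N _ (dmds_inv opens F Hdm) j k x Gx Ax) as [c [Cc Ac]].
  apply (C_noA opens F N k W M HG c Cc). apply Gam_le with (k := (j + k)%nat); auto. lia.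
Qed.

Lemma INIT {X} opens d (H : @MS X opens d) (F : X -> Z -> X -> Prop) N :
  is_dmds opens F -> isolating_neighborhood opens F N ->
  exists k W M, Good opens F N k W M.
Proof.
  intros Hdm [HN HI].
  assert (usc1 := dmds_usc1 opens F Hdm). assert (usc2 := dmds_usc2 opens F Hdm).
  assert (cp1 := dmds_cpt1 opens F Hdm). assert (cp2 := dmds_cpt2 opens F Hdm).
  assert (cA : forall m, compact opens (Gam N (finv F) N m)) by (intros; apply (Gam_compact opens d H); auto).
  assert (cB : forall m, compact opens (Gam N (gen F) N m)) by (intros; apply (Gam_compact opens d H); auto).
  assert (clI : closed opens (fun x => ~ interior opens N x))
    by (apply (closed_notopen opens d H); apply (interior_open opens d H)).
  assert (Hm : exists m, forall x, Gam N (finv F) N m x -> Gam N (gen F) N m x -> interior opens N x).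
  { apply NNPP; intro Hn.
    destruct (fip opens N nat 0%nat (fun m x => Gam N (finv F) N m x /\ Gam N (gen F) N m x /\ ~ interior opens N x)) as [x [Nx Hx]].
    - auto.
    - intros m. apply (closed_and opens d H). apply (compact_closed opens d H); auto.
      apply (closed_and opens d H); auto. apply (compact_closed opens d H); auto.
    - intros i j. exists (max i j). intros x [A1 [B1 C1]].
      split; (split; [|split]); auto; apply Gam_le with (k := max i j); auto; lia.
    - intros m. apply NNPP; intro Hne. apply Hn. exists m. intros x Ax Bx.
      apply NNPP; intro nI. apply Hne. exists x. split. eapply Gam_N; eauto. auto.
    - assert (Ix : Inv F N x). { apply (Q0_Inv opens d H F N x Hdm HN). intros m; split; apply Hx. }
      apply (Hx 0%nat). apply HI; auto. }
  destruct Hm as [m Hm]. set (k := S m).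
  assert (H0 : forall x, Gam N (finv F) N k x -> Gam N (gen F) N k x -> interior opens N x).
  { intros x Ax Bx. apply Hm; apply Gam_succ_sub; auto. }
  set (Q0 := fun x => forall m, Gam N (finv F) N m x /\ Gam N (gen F) N m x).
  assert (HQ0 : compact opens Q0).
  { apply (compact_ext opens (fun x => N x /\ Q0 x)).
    apply compact_closed_and; auto. apply (closed_all opens d H). intros i.
    apply (closed_and opens d H); apply (compact_closed opens d H); auto.
    intros x; split. tauto. intros Qx; split; auto. apply (Qx 0%nat). }
  assert (HQ0N : subset Q0 N) by (intros x Qx; apply (Qx 0%nat)).
  destruct (LIM_choose_all opens d H F N Q0 Hdm HN HQ0 HQ0N (fun x => Gam N (finv F) N k x /\ ~ interior opens N x)
             ltac:(apply (closed_and opens d H); auto; apply (compact_closed opens d H); auto) k) as [p [Hp Hpp]].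
  { intros j Hj x Gx [Ax nI]. apply nI. apply H0; auto.
    apply Gam_le with (k := (j + k)%nat). lia. apply Gam_comp.
    eapply Gam_mono; [|exact Gx]. intros z Qz _. apply Qz. }
  exists k, (Wof N (fst p)), (fun _ => False).
  split. unfold k; lia.
  split. auto.
  split. apply (Wof_compact opens d H); auto. apply Hp.
  split. intros x [Nx _]; auto.
  split. apply (Inv_int_W opens d H F N Q0); auto.
    intros x Ix m0. split. apply Inv_A; auto. apply (dmds_inv opens F Hdm). apply Inv_B; auto.
  split. intros j Hj x Gx Ax. apply NNPP; intro nI. apply (Hpp j Hj x); auto.
  split. apply compact_empty.
  split. intros x [].
  intros x [].
Qed.

Lemma STEP {X} opens d (H : @MS X opens d) (F : X -> Z -> X -> Prop) N k (W M : X -> Prop) :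
  is_dmds opens F -> isolating_neighborhood opens F N -> Good opens F N k W M ->
  exists W' M', Good opens F N k W' M' /\
    subset (P1set F N k W) (interior_in opens N (P1set F N k W')) /\
    subset (P2set opens F N k W M) (interior_in opens N (P2set opens F N k W' M')).
Proof.
  intros Hdm [HN HI] HG.
  assert (clI : closed opens (fun x => ~ interior opens N x))
    by (apply (closed_notopen opens d H); apply (interior_open opens d H)).
  assert (cA : compact opens (Gam N (finv F) N k))
    by (apply (Gam_compact opens d H); auto; [apply (dmds_usc2 opens F Hdm)|apply (dmds_cpt2 opens F Hdm)]).
  assert (HP1 := P1_compact opens d H F N k W M Hdm HN HG).
  assert (HP2 := P2_compact opens d H F N k W M Hdm HN HG).
  assert (HP1N : subset (P1set F N k W) N) by (intros x; apply P1_N).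
  assert (HP21 : subset (P2set opens F N k W M) (P1set F N k W)) by (intros x; apply (P2_sub_P1 opens F N k W M HG)).
  destruct (LIM_choose_all opens d H F N (P1set F N k W) Hdm HN HP1 HP1N
             (fun x => Gam N (finv F) N k x /\ ~ interior opens N x)
             ltac:(apply (closed_and opens d H); auto; apply (compact_closed opens d H); auto) k) as [p1 [Hp1 Hpp1]].
  { intros j Hj x Gx [Ax nI]. apply nI. apply (P1_A opens F N k W M HG); auto.
    eapply (Gam_inv N (gen F) _ (P1set F N k W)); [| |exact Gx].
    apply (P1_fwd opens F N k W M HG). auto. }
  destruct (LIM_choose opens d H F N (P2set opens F N k W M) Hdm HN HP2 (fun x Px => HP1N x (HP21 x Px)) 0
             (Gam N (finv F) N k) ltac:(apply (compact_closed opens d H); auto)) as [p2 [Hp2 Hpp2]].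
  { intros x [P2x _] Ax. apply (P2_noA opens F N k W M Hdm HG x P2x Ax). }
  assert (Hv : valid opens (P2set opens F N k W M) (pjoin p1 p2)).
  { apply (valid_join opens d H); auto. apply (valid_sub opens (P1set F N k W)); auto. }
  pose proof HG as [Hk [H0 [HW [HWN [HWI _]]]]].
  exists (Wof N (fst p1)), (Wof N (fst (pjoin p1 p2))).
  assert (HG' : Good opens F N k (Wof N (fst p1)) (Wof N (fst (pjoin p1 p2)))).
  { split. auto. split. auto.
    split. apply (Wof_compact opens d H); auto. apply Hp1.
    split. intros x [Nx _]; auto.
    split. apply (Inv_int_W opens d H F N (P1set F N k W)); auto.
      intros x Ix. left. exists 0%nat. split. lia. simpl. split. apply (interior_sub opens W x). apply HWI; auto.
      apply HI in Ix. apply (interior_sub opens N x Ix).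
    split. intros j Hj x Gx Ax. apply NNPP; intro nI. apply (Hpp1 j Hj x); auto.
    split. apply (Wof_compact opens d H); auto. apply Hv.
    split. intros x Mx. apply Wof_join_sub in Mx. left. exists 0%nat. split. lia. simpl. split. tauto. apply Mx.
    intros x Mx Ax. apply Wof_join_sub in Mx. apply (Hpp2 x); auto. simpl. split. tauto. apply Mx. }
  split. auto. split.
  - intros x Px. eapply interior_in_mono; [|apply (rel_int opens N (P1set F N k W) p1 Hp1 HP1N x Px)].
    intros y Wy. left. exists 0%nat. split. lia. simpl. split; auto. apply Wy.
  - intros x Px. eapply interior_in_mono; [|apply (rel_int opens N (P2set opens F N k W M) _ Hv (fun x Px => HP1N x (HP21 x Px)) x Px)].
    intros y My. exists 0%nat. split. lia. simpl. split. right. auto. apply My.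
Qed.

Theorem mainTheorem6 (X : Type) (opens : (X -> Prop) -> Prop)
  (F : X -> Z -> X -> Prop) (N : X -> Prop) :
  locally_compact opens -> metrizable opens ->
  is_dmds opens F ->
  isolating_neighborhood opens F N ->
  forall n : nat,
    exists P : nat -> (X -> Prop) * (X -> Prop),
      (forall i : nat, (1 <= i <= n)%nat ->
         weak_index_pair opens F N (fst (P i)) (snd (P i))) /\
      (forall i : nat, (1 <= i < n)%nat ->
         subset (fst (P i)) (interior_in opens N (fst (P (S i)))) /\
         subset (snd (P i)) (interior_in opens N (snd (P (S i))))).
Proof.
  intros _ [d [Hd Hop]] Hdm Hiso n.
  assert (H : MS opens d) by (split; auto).
  destruct (INIT opens d H F N Hdm Hiso) as [k [W0 [M0 HG0]]].
  assert (Hnext : forall p : (X -> Prop) * (X -> Prop), {q : (X -> Prop) * (X -> Prop) |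
     Good opens F N k (fst p) (snd p) -> Good opens F N k (fst q) (snd q) /\
     subset (P1set F N k (fst p)) (interior_in opens N (P1set F N k (fst q))) /\
     subset (P2set opens F N k (fst p) (snd p)) (interior_in opens N (P2set opens F N k (fst q) (snd q)))}).
  { intros p. apply constructive_indefinite_description.
    destruct (classic (Good opens F N k (fst p) (snd p))) as [Hg|Hg].
    - destruct (STEP opens d H F N k (fst p) (snd p) Hdm Hiso Hg) as [W' [M' HH]].
      exists (W', M'); simpl; auto.
    - exists p; tauto. }
  set (nxt := fun p => proj1_sig (Hnext p)).
  set (sq := fun i => Nat.iter i nxt (W0, M0)).
  assert (Hgood : forall i, Good opens F N k (fst (sq i)) (snd (sq i))).
  { induction i. exact HG0. simpl. apply (proj2_sig (Hnext _) IHi). }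
  exists (fun i => (P1set F N k (fst (sq i)), P2set opens F N k (fst (sq i)) (snd (sq i)))).
  split.
  - intros i _. simpl. apply (WIP opens d H); auto. apply Hiso.
  - intros i _. simpl. apply (proj2_sig (Hnext _) (Hgood i)).
Qed.
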